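(* Let $Y$ be a complex Banach space, $U:\mathcal B(\mathcal H)\to Y$ a non-null bounded linear operator with $\|U\|<\lambda$, $1\le p<\infty$, and $Z=(\mathbb C^n,\|\cdot\|)$ a Banach space whose canonical basis is normalized $1$-unconditional. Then for every $n$, $$\frac{R_\lambda(\mathbb D,p,U)}{n}\le AP_\lambda(B_Z,p,U)\le\|Id:Z\to\ell_1^n\|\frac{R_\lambda(\mathbb D,p,U)}{n^{1/p}}.$$
   Context: $\mathcal B(\mathcal H)$: bounded operators on a complex Hilbert space; $\mathbb D$ the open unit disc. For a simply connected complete Reinhardt domain $\Omega\subset\mathbb C^k$, bounded pluriharmonic $f:\Omega\to\mathcal B(\mathcal H)$ are written $f(z)=\sum_\alpha a_\alpha z^\alpha+\sum_{|\alpha|\ge1}b_\alpha^*\bar z^\alpha$ ($b_0=0$), $\|f\|_\Omega=\sup\|f(z)\|$. $R_\lambda(\Omega,p,U)$: supremum of $r\ge0$ with $\sup_{z\in r\Omega}\sum_\alpha(\|U(a_\alpha)\|^p+\|U(b_\alpha)\|^p)|z^\alpha|^p\le\lambda^p\|f\|_\Omega^p$ for all such $f$. $AP_\lambda(\Omega,p,U)$: supremum of $\frac1k\sum_{i=1}^kr_i$ over $r\in\mathbb R^k_{\ge0}$ with $\sum_\alpha(\|U(a_\alpha)\|^p+\|U(b_\alpha)\|^p)r^{p\alpha}\le\lambda^p\|f\|_\Omega^p$ for all such $f$. $B_Z$ open unit ball of $Z$. *)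

(* Defs.v *)
From HB Require Import structures.
From mathcomp Require Import all_boot all_order all_algebra.
From mathcomp Require Import all_classical all_reals.
From mathcomp Require Import ereal exp.
From mathcomp Require Import complex.
Set Implicit Arguments. Unset Strict Implicit. Unset Printing Implicit Defensive.
Import Order.TTheory GRing.Theory Num.Theory.
Local Open Scope ring_scope.
Local Open Scope classical_set_scope.

Section Defs.
Variable R : realType.
Local Notation C := (R[i]).

Definition cmod (z : C) : R := Normc.normc z.

Section Hilbert.
Variables (H : lmodType C) (ip : H -> H -> C).

Definition hnorm (x : H) : R := Num.sqrt (complex.Re (ip x x)).

Record is_hilbert : Prop := {
  ip_linl : forall (a : C) x y z, ip (a *: x + y) z = a * ip x z + ip y z;
  ip_conj : forall x y, ip y x = conjc (ip x y);
  ip_pos  : forall x, x != 0 -> 0 < ip x x;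
  ip_complete : forall u : nat -> H,
      (forall e : R, 0 < e -> exists N, forall m k, (N <= m)%N -> (N <= k)%N ->
          hnorm (u m - u k) < e) ->
      exists l, forall e : R, 0 < e -> exists N, forall m, (N <= m)%N ->
          hnorm (u m - l) < e }.

Definition hlinear (T : H -> H) : Prop :=
  forall (a : C) x y, T (a *: x + y) = a *: T x + T y.
Definition hbounded (T : H -> H) : Prop :=
  exists M : R, forall x, hnorm (T x) <= M * hnorm x.
Definition BH (T : H -> H) : Prop := hlinear T /\ hbounded T.

Definition opnorm (T : H -> H) : R :=
  sup [set hnorm (T x) | x in [set x : H | hnorm x <= 1]].

Definition is_adjoint (T Ts : H -> H) : Prop :=
  forall x y, ip (Ts x) y = ip x (T y).
End Hilbert.

Record is_banach (Y : lmodType C) (ny : Y -> R) : Prop := {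
  ny_triangle : forall x y, ny (x + y) <= ny x + ny y;
  ny_scale : forall (a : C) x, ny (a *: x) = cmod a * ny x;
  ny_def : forall x, ny x = 0 -> x = 0;
  ny_complete : forall u : nat -> Y,
      (forall e : R, 0 < e -> exists N, forall m k, (N <= m)%N -> (N <= k)%N ->
          ny (u m - u k) < e) ->
      exists l, forall e : R, 0 < e -> exists N, forall m, (N <= m)%N ->
          ny (u m - l) < e }.

Section Op.
Variables (H : lmodType C) (ip : H -> H -> C) (Y : lmodType C) (ny : Y -> R).

Definition Ulinear (U : (H -> H) -> Y) : Prop :=
  forall (a : C) T S, BH ip T -> BH ip S ->
    U (fun x => a *: T x + S x) = a *: U T + U S.
Definition Ubounded (U : (H -> H) -> Y) : Prop :=
  exists M : R, forall T, BH ip T -> ny (U T) <= M * opnorm ip T.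
Definition Unonnull (U : (H -> H) -> Y) : Prop :=
  exists T, BH ip T /\ U T != 0.
Definition Unorm (U : (H -> H) -> Y) : R :=
  sup [set ny (U T) | T in [set T | BH ip T /\ opnorm ip T <= 1]].
End Op.

(* a multi-index alpha in N^k is a {ffun 'I_k -> nat}; the multi-indices with
   |alpha| < N are enumerated as the beta : {ffun 'I_k -> 'I_N} with
   \sum_i beta i < N, mapped to mi beta. *)
Definition mi k N (b : {ffun 'I_k -> 'I_N}) : {ffun 'I_k -> nat} :=
  [ffun i => nat_of_ord (b i)].
Definition mdeg k (al : {ffun 'I_k -> nat}) : nat := (\sum_(i < k) al i)%N.

Definition mono k (z : 'I_k -> C) (al : {ffun 'I_k -> nat}) : C :=
  \prod_(i < k) z i ^+ al i.
Definition cmono k (z : 'I_k -> C) (al : {ffun 'I_k -> nat}) : R :=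
  \prod_(i < k) cmod (z i) ^+ al i.
Definition rpow_mono k (r : 'I_k -> R) (p : R) (al : {ffun 'I_k -> nat}) : R :=
  \prod_(i < k) r i `^ (p * (al i)%:R).

Section Pluri.
Variables (H : lmodType C) (ip : H -> H -> C) (k : nat).
Implicit Types (a b c : {ffun 'I_k -> nat} -> H -> H) (F : ('I_k -> C) -> H -> H).

Definition psum a c (z : 'I_k -> C) (x : H) (N : nat) : H :=
  \sum_(be : {ffun 'I_k -> 'I_N} | (mdeg (mi be) < N)%N)
     (mono z (mi be) *: a (mi be) x
      + mono (fun i => conjc (z i)) (mi be) *: c (mi be) x).

(* F is the bounded pluriharmonic function
     F z = sum_alpha a_alpha z^alpha + sum_{|alpha|>=1} b_alpha^* zbar^alpha
   on Omega: coefficients in B(H), b_0 = 0, c_alpha = b_alpha^*, the series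
   converges absolutely on Omega with sum F, and F is bounded on Omega. *)
Definition pluri_bdd (Om : set ('I_k -> C)) a b c F : Prop :=
  (forall al, BH ip (a al) /\ BH ip (b al)) /\
      b [ffun=> 0%N] = (fun=> 0) /\
      (forall al, is_adjoint ip (b al) (c al)) /\
      (forall z, Om z -> exists M : R, forall N,
        \sum_(be : {ffun 'I_k -> 'I_N} | (mdeg (mi be) < N)%N)
           ((opnorm ip (a (mi be)) + opnorm ip (b (mi be))) * cmono z (mi be)) <= M) /\
      (forall z x, Om z -> forall e : R, 0 < e -> exists N0, forall N, (N0 <= N)%N ->
        hnorm ip (psum a c z x N - F z x) < e) /\
    (exists M : R, forall z x, Om z -> hnorm ip (F z x) <= M * hnorm ip x).

Definition fnorm (Om : set ('I_k -> C)) F : R :=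
  sup [set opnorm ip (F z) | z in Om].

Variables (Y : lmodType C) (ny : Y -> R) (U : (H -> H) -> Y) (p lam : R).

Definition scale_dom (r : R) (Om : set ('I_k -> C)) : set ('I_k -> C) :=
  [set (fun i => (r%:C)%C * z i) | z in Om].

Definition R_cond (Om : set ('I_k -> C)) (r : R) : Prop :=
  forall a b c F, pluri_bdd Om a b c F ->
    forall z, scale_dom r Om z -> forall N,
      \sum_(be : {ffun 'I_k -> 'I_N} | (mdeg (mi be) < N)%N)
         ((ny (U (a (mi be))) `^ p + ny (U (b (mi be))) `^ p) * cmono z (mi be) `^ p)
      <= lam `^ p * fnorm Om F `^ p.

Definition AP_cond (Om : set ('I_k -> C)) (r : 'I_k -> R) : Prop :=
  forall a b c F, pluri_bdd Om a b c F ->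
    forall N,
      \sum_(be : {ffun 'I_k -> 'I_N} | (mdeg (mi be) < N)%N)
         ((ny (U (a (mi be))) `^ p + ny (U (b (mi be))) `^ p) * rpow_mono r p (mi be))
      <= lam `^ p * fnorm Om F `^ p.

Definition R_lambda (Om : set ('I_k -> C)) : \bar R :=
  ereal_sup [set r%:E | r in [set r : R | 0 <= r /\ R_cond Om r]].

Definition AP_lambda (Om : set ('I_k -> C)) : \bar R :=
  ereal_sup [set ((k%:R)^-1 * \sum_(i < k) r i)%:E
            | r in [set r : 'I_k -> R | (forall i, 0 <= r i) /\ AP_cond Om r]].
End Pluri.

Definition unit_disc : set ('I_1 -> C) := [set z | cmod (z ord0) < 1].

Definition canon n (i : 'I_n) : 'I_n -> C := fun j => (i == j)%:R.

Record unc_norm n (nz : ('I_n -> C) -> R) : Prop := {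
  nz_triangle : forall x y, nz (fun i => x i + y i) <= nz x + nz y;
  nz_scale : forall (a : C) x, nz (fun i => a * x i) = cmod a * nz x;
  nz_def : forall x, nz x = 0 -> x = (fun=> 0);
  nz_normalized : forall i, nz (canon i) = 1;
  nz_unconditional : forall (eps x : 'I_n -> C),
      (forall i, cmod (eps i) <= 1) -> nz (fun i => eps i * x i) <= nz x }.

Definition ball_Z n (nz : ('I_n -> C) -> R) : set ('I_n -> C) := [set z | nz z < 1].

Definition id_to_l1 n (nz : ('I_n -> C) -> R) : R :=
  sup [set \sum_(i < n) cmod (x i) | x in [set x | nz x <= 1]].
End Defs.

(* Main.v *)
Require Import Defs.
From HB Require Import structures.
From mathcomp Require Import all_boot all_order all_algebra.
From mathcomp Require Import all_classical all_reals.
From mathcomp Require Import ereal exp.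
From mathcomp Require Import complex.
From mathcomp Require Import interval_inference convex hoelder.
From mathcomp Require Import ring lra.
Import Order.TTheory GRing.Theory Num.Theory.
Local Open Scope ring_scope.
Local Open Scope classical_set_scope.
Local Open Scope complex_scope.
Set Implicit Arguments. Unset Strict Implicit. Unset Printing Implicit Defensive.
Section A.
Variable R : realType.
Local Notation C := (R[i]).

Lemma cmodE (z : C) : (cmod z)%:C = `|z|.
Proof. by []. Qed.

Lemma cmod_ge0 (z : C) : 0 <= cmod z.
Proof. by case: z => a b; rewrite /cmod /= sqrtr_ge0. Qed.

Lemma cmodM (x y : C) : cmod (x * y) = cmod x * cmod y.
Proof. exact: Normc.normcM. Qed.

Lemma cmodD (x y : C) : cmod (x + y) <= cmod x + cmod y.
Proof. exact: (@le_normcD R x y). Qed.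

Lemma cmodR (x : R) : cmod x%:C = `|x|.
Proof. by rewrite /cmod /= expr0n /= addr0 sqrtr_sqr. Qed.

Lemma cmodJ (z : C) : cmod (conjc z) = cmod z.
Proof. by case: z => a b; rewrite /cmod /= sqrrN. Qed.

Lemma cmodX (z : C) j : cmod (z ^+ j) = cmod z ^+ j.
Proof.
elim: j => [|j IH]; first by rewrite !expr0 /cmod Normc.normc1.
by rewrite !exprS cmodM IH.
Qed.

Lemma cmod0 : cmod (0 : C) = 0.
Proof. exact: Normc.normc0. Qed.

Lemma cmod_sum (I : finType) (P : pred I) (F : I -> C) :
  cmod (\sum_(i | P i) F i) <= \sum_(i | P i) cmod (F i).
Proof.
elim/big_rec2: _ => [|i y x _ Hx]; first by rewrite cmod0.
by apply: (le_trans (cmodD _ _)); rewrite lerD2l.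
Qed.

Lemma mulcJ (a : C) : a * conjc a = ((cmod a) ^+ 2)%:C.
Proof.
case: a => u v; rewrite /cmod /= sqr_sqrtr ?addr_ge0 ?sqr_ge0 //.
by simpc; congr Complex; ring.
Qed.

Lemma Re_realM (k : R) (w : C) : complex.Re (k%:C * w) = k * complex.Re w.
Proof. by case: w => u v; simpc. Qed.

Lemma conjc_realK (k : R) : conjc k%:C = k%:C.
Proof. exact: conjc_real. Qed.

Lemma sup_ge0' (E : set R) : (exists2 y, E y & 0 <= y) -> 0 <= sup E.
Proof.
move=> [y Ey y0]; case: (pselect (has_ubound E)) => [ub|nub].
  exact: (le_trans y0 (sup_upper_bound (conj (ex_intro _ y Ey) ub) Ey)).
by rewrite sup_out // => -[].
Qed.

Section Hil.
Variables (H : lmodType C) (ip : H -> H -> C).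
Hypothesis hH : is_hilbert ip.

Lemma ip0l z : ip 0 z = 0.
Proof.
have h := ip_linl hH 1 0 0 z; rewrite scale1r addr0 mul1r in h.
by apply: (addrI (ip 0 z)); rewrite addr0 -h.
Qed.

Lemma ip_scalel a x z : ip (a *: x) z = a * ip x z.
Proof. by have := ip_linl hH a x 0 z; rewrite addr0 ip0l addr0. Qed.

Lemma ip_addl x y z : ip (x + y) z = ip x z + ip y z.
Proof. by have := ip_linl hH 1 x y z; rewrite scale1r mul1r. Qed.

Lemma ip_scaler a x y : ip x (a *: y) = conjc a * ip x y.
Proof.
by rewrite (ip_conj hH) ip_scalel rmorphM /= -(ip_conj hH).
Qed.

Lemma hnorm_ge0 x : 0 <= hnorm ip x.
Proof. exact: sqrtr_ge0. Qed.

Lemma hnorm0 : hnorm ip 0 = 0.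
Proof. by rewrite /hnorm ip0l sqrtr0. Qed.

Lemma hnorm_scale a x : hnorm ip (a *: x) = cmod a * hnorm ip x.
Proof.
rewrite /hnorm ip_scalel ip_scaler mulrA mulcJ Re_realM.
by rewrite sqrtrM ?sqr_ge0 // sqrtr_sqr ger0_norm // cmod_ge0.
Qed.

Lemma hnormR (k : R) x : 0 <= k -> hnorm ip (k%:C *: x) = k * hnorm ip x.
Proof. by move=> k0; rewrite hnorm_scale cmodR ger0_norm. Qed.

Lemma bnd_max (T : H -> H) M : (forall x, hnorm ip (T x) <= M * hnorm ip x) ->
  forall x, hnorm ip x <= 1 -> hnorm ip (T x) <= Num.max M 0.
Proof.
move=> hM x hx; apply: (le_trans (hM x)).
apply: (le_trans (ler_wpM2r (hnorm_ge0 x) (_ : M <= Num.max M 0))); first by rewrite le_max lexx.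
rewrite -[X in _ <= X]mulr1; apply: ler_wpM2l => //.
by rewrite le_max lexx orbT.
Qed.

Lemma opnorm_ge0 (T : H -> H) : 0 <= opnorm ip T.
Proof.
apply: sup_ge0'; exists (hnorm ip (T 0)); last exact: hnorm_ge0.
by exists 0 => //=; rewrite hnorm0.
Qed.

Lemma opnorm_le (T : H -> H) M :
  (forall x, hnorm ip x <= 1 -> hnorm ip (T x) <= M) -> opnorm ip T <= M.
Proof.
move=> hM; apply: ge_sup; first by exists (hnorm ip (T 0)), 0 => //=; rewrite hnorm0.
by move=> _ [x hx <-]; exact: hM.
Qed.

Lemma opnorm_ub (T : H -> H) M x :
  (forall x, hnorm ip x <= 1 -> hnorm ip (T x) <= M) -> hnorm ip x <= 1 ->
  hnorm ip (T x) <= opnorm ip T.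
Proof.
move=> hM hx; apply: sup_upper_bound; last by exists x.
split; first by exists (hnorm ip (T 0)), 0 => //=; rewrite hnorm0.
by exists M => _ [y hy <-]; exact: hM.
Qed.

Lemma BH_ub (T : H -> H) : BH ip T -> exists M,
  forall x, hnorm ip x <= 1 -> hnorm ip (T x) <= M.
Proof. by move=> [_ [M hM]]; exists (Num.max M 0); exact: bnd_max. Qed.

Lemma opnorm_ub' (T : H -> H) x : BH ip T -> hnorm ip x <= 1 ->
  hnorm ip (T x) <= opnorm ip T.
Proof. move=> hT hx; have [M hM] := BH_ub hT; exact: opnorm_ub hM hx. Qed.

Lemma BH_scale (T : H -> H) a : BH ip T -> BH ip (fun x => a *: T x).
Proof.
move=> [lin [M hM]]; split.
  by move=> b x y; rewrite lin scalerDr !scalerA mulrC.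
exists (cmod a * M) => x; rewrite hnorm_scale -mulrA.
by apply: ler_wpM2l; [exact: cmod_ge0 | exact: hM].
Qed.

Lemma BH0 : BH ip (fun=> 0).
Proof.
split; first by move=> a x y; rewrite scaler0 addr0.
by exists 0 => x; rewrite hnorm0 mul0r.
Qed.

Lemma opnormZ (T : H -> H) (k : R) : 0 <= k -> BH ip T ->
  opnorm ip (fun x => k%:C *: T x) <= k * opnorm ip T.
Proof.
move=> k0 hT; apply: opnorm_le => x hx; rewrite hnormR //.
by apply: ler_wpM2l => //; exact: opnorm_ub'.
Qed.
End Hil.

Section Ban.
Variables (Y : lmodType C) (ny : Y -> R).
Hypothesis hY : is_banach ny.

Lemma ny0 : ny 0 = 0.
Proof. by have := ny_scale hY 0 0; rewrite scale0r cmod0 mul0r. Qed.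

Lemma nyZR (k : R) y : 0 <= k -> ny (k%:C *: y) = k * ny y.
Proof. by move=> k0; rewrite (ny_scale hY) cmodR ger0_norm. Qed.

Lemma ny_ge0 y : 0 <= ny y.
Proof.
have h1 : ny (- y) = ny y.
  rewrite -scaleN1r (ny_scale hY) -[-1](rmorphN1 (real_complex R)) cmodR.
  by rewrite normrN normr1 mul1r.
have := ny_triangle hY y (- y); rewrite subrr ny0 h1 => h; lra.
Qed.
End Ban.

Section Uop.
Variables (H : lmodType C) (ip : H -> H -> C) (Y : lmodType C) (U : (H -> H) -> Y).
Hypothesis hH : is_hilbert ip.
Hypothesis hU : Ulinear ip U.

Lemma U0 : U (fun=> 0) = 0.
Proof.
have := hU 1 (BH0 hH) (BH0 hH).
have -> : (fun x : H => 1 *: (0 : H) + 0) = fun=> 0.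
  by apply: funext => x; rewrite scaler0 addr0.
rewrite scale1r => h; apply: (addrI (U (fun=> 0))); by rewrite addr0 -h.
Qed.

Lemma UZ (T : H -> H) a : BH ip T -> U (fun x => a *: T x) = a *: U T.
Proof.
move=> hT; have := hU a hT (BH0 hH); rewrite U0 addr0.
have -> // : (fun x : H => a *: T x + 0) = fun x => a *: T x.
by apply: funext => x; rewrite addr0.
Qed.
End Uop.
End A.
Section Comb.

Definition ext n (i0 : 'I_n) (j : nat) : {ffun 'I_n -> nat} :=
  [ffun i => if i == i0 then j else 0%N].
Definition j1 (j : nat) : {ffun 'I_1 -> nat} := [ffun=> j].

Lemma mdeg_ext n (i0 : 'I_n) j : mdeg (ext i0 j) = j.
Proof.
rewrite /mdeg (bigD1 i0) //= big1 ?addn0; first by rewrite ffunE eqxx.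
by move=> i /negPf hi; rewrite ffunE hi.
Qed.

Lemma ext1 j : ext (ord0 : 'I_1) j = j1 j.
Proof. by apply/ffunP => i; rewrite !ffunE ord1 eqxx. Qed.

Lemma sum_supp (V : nmodType) (n N : nat) (i0 : 'I_n) (Phi : {ffun 'I_n -> nat} -> V) :
  (forall al : {ffun 'I_n -> nat}, (exists i, i != i0 /\ al i != 0%N) -> Phi al = 0) ->
  \sum_(be : {ffun 'I_n -> 'I_N} | (mdeg (mi be) < N)%N) Phi (mi be)
  = \sum_(j < N) Phi (ext i0 j).
Proof.
move=> h0.
pose emb (j : 'I_N) : {ffun 'I_n -> 'I_N} :=
  [ffun i => if i == i0 then j else Ordinal (leq_ltn_trans (leq0n j) (ltn_ord j))].
have miemb j : mi (emb j) = ext i0 j.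
  by apply/ffunP => i; rewrite !ffunE; case: (i == i0).
have embi0 j : emb j i0 = j by rewrite ffunE eqxx.
have embI j k : (emb j == emb k) = (j == k).
  apply/eqP/eqP => [h|->] //; by rewrite -(embi0 j) h embi0.
rewrite big_mkcond /=.
transitivity (\sum_(be : {ffun 'I_n -> 'I_N}) \sum_(j < N)
                 (if be == emb j then Phi (mi be) else 0)).
  apply: eq_bigr => be _.
  have [/eqP E|NE] := boolP (be == emb (be i0)).
    rewrite E miemb mdeg_ext ltn_ord -big_mkcond.
    rewrite (eq_bigl (fun j => j == be i0)) ?big_pred1_eq // => j.
    by rewrite embI eq_sym.
  rewrite big1; last first.
    move=> j _; case: eqP => // h; exfalso.
    by move: NE; rewrite h embi0 eqxx.
  case: ifP => // _; apply: h0.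
  have /existsP [i /andP [hi hne]] :
      [exists i, (i != i0) && (be i != emb (be i0) i)].
    apply: contraNT NE => /existsPn H; apply/eqP/ffunP => i.
    move: (H i); rewrite negb_and !negbK; case/orP => [/eqP ->|/eqP //].
    by rewrite embi0.
  exists i; split => //; rewrite ffunE.
  rewrite ffunE (negPf hi) in hne.
  by apply: contra hne => /eqP h; apply/eqP/val_inj.
rewrite exchange_big /=; apply: eq_bigr => j _.
by rewrite -big_mkcond big_pred1_eq miemb.
Qed.

Lemma sum_supp1 (V : nmodType) (N : nat) (Phi : {ffun 'I_1 -> nat} -> V) :
  \sum_(be : {ffun 'I_1 -> 'I_N} | (mdeg (mi be) < N)%N) Phi (mi be)
  = \sum_(j < N) Phi (j1 j).
Proof.
rewrite (@sum_supp _ 1 N ord0); first by apply: eq_bigr => j _; rewrite ext1.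
by move=> al [i [hi _]]; move: hi; rewrite ord1 eqxx.
Qed.

Lemma sum_deg (V : nmodType) (n N : nat) (F : {ffun 'I_n -> 'I_N} -> V) :
  \sum_(be : {ffun 'I_n -> 'I_N} | (mdeg (mi be) < N)%N) F be
  = \sum_(j < N) \sum_(be : {ffun 'I_n -> 'I_N} | mdeg (mi be) == j) F be.
Proof.
case: N F => [|N] F.
  by rewrite big_ord0 big1 // => be; rewrite ltn0.
rewrite (partition_big (fun be => inord (mdeg (mi be)) : 'I_N.+1) predT) //=.
apply: eq_bigr => j _; apply: eq_bigl => be.
case: (ltnP (mdeg (mi be)) N.+1) => h /=.
  apply/eqP/eqP => [<-|hj]; first by rewrite inordK.
  by apply/val_inj; rewrite /= inordK.
apply/esym/negbTE; apply: contraTneq h => ->; by rewrite -ltnNge ltn_ord.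
Qed.

Definition cnt (n m : nat) (s : {ffun 'I_m -> 'I_n}) : {ffun 'I_n -> nat} :=
  [ffun i => #|[pred k | s k == i]|].
Definition coef (n : nat) (al : {ffun 'I_n -> nat}) : nat :=
  #|[pred s : {ffun 'I_(mdeg al) -> 'I_n} | cnt s == al]|.

Lemma coefE n m (al : {ffun 'I_n -> nat}) : mdeg al = m ->
  coef al = #|[pred s : {ffun 'I_m -> 'I_n} | cnt s == al]|.
Proof. by move=> <-. Qed.

Lemma sum_cnt n m (s : {ffun 'I_m -> 'I_n}) : (\sum_(i < n) cnt s i)%N = m.
Proof.
rewrite -{2}(card_ord m) -sum1_card (partition_big s predT) //=.
by apply: eq_bigr => i _; rewrite ffunE -sum1_card.
Qed.

Lemma multinom (K : comNzRingType) (n N j : nat) (x : 'I_n -> K) : (j < N)%N ->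
  \sum_(be : {ffun 'I_n -> 'I_N} | mdeg (mi be) == j)
     (coef (mi be))%:R * \prod_(i < n) x i ^+ be i
  = (\sum_(i < n) x i) ^+ j.
Proof.
move=> hjN.
have -> : (\sum_(i < n) x i) ^+ j = \prod_(k < j) \sum_(i < n) x i.
  by rewrite prodr_const card_ord.
rewrite bigA_distr_bigA /=.
have cle (s : {ffun 'I_j -> 'I_n}) i : (cnt s i < N)%N.
  apply: leq_ltn_trans hjN; rewrite ffunE; apply: (leq_trans (max_card _)); by rewrite card_ord.
pose cntb (s : {ffun 'I_j -> 'I_n}) : {ffun 'I_n -> 'I_N} := [ffun i => Ordinal (cle s i)].
have micntb s : mi (cntb s) = cnt s by apply/ffunP => i; rewrite !ffunE.
rewrite (partition_big cntb (fun be => mdeg (mi be) == j)); last first.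
  by move=> s _; rewrite micntb /mdeg sum_cnt.
apply: eq_bigr => be /eqP hbe; symmetry.
transitivity (\sum_(s : {ffun 'I_j -> 'I_n} | cntb s == be) \prod_(i < n) x i ^+ be i).
  apply: eq_big => [s //|s /andP [_ /eqP <-]].
  rewrite (partition_big s predT) //=; apply: eq_bigr => i _.
  have -> : \prod_(k < j | s k == i) x (s k) = \prod_(k < j | s k == i) x i.
    by apply: eq_bigr => k /eqP ->.
  rewrite prodr_const /cntb ffunE /= /cnt ffunE; congr (_ ^+ _); exact: eq_card.
rewrite sumr_const mulr_natl; congr (_ *+ _).
rewrite (coefE hbe); apply: eq_card => s; rewrite !inE -micntb.
transitivity (cntb s == be); first by [].
apply/eqP/eqP => [->|h] //.
apply/ffunP => i; apply/val_inj; have := congr1 (fun f : {ffun _ -> nat} => f i) h.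
rewrite !ffunE /= => ->; exact: ffunE.
Qed.
End Comb.
Section PM.
Variable R : realType.
Lemma conv2 (p t x y : R) : 1 <= p -> 0 <= t -> t <= 1 -> 0 <= x -> 0 <= y ->
  (t * x + (1 - t) * y) `^ p <= t * x `^ p + (1 - t) * y `^ p.
Proof.
move=> p1 t0 t1 x0 y0.
have := (@convex_powR R p p1 (Itv01 t0 t1) x y).
rewrite !convRE /=; apply.
  by rewrite inE /= in_itv /= x0.
by rewrite inE /= in_itv /= y0.
Qed.

Lemma powmean_nat (p : R) (r : nat -> R) n : 1 <= p -> (forall i, 0 <= r i) ->
  n%:R * ((n%:R)^-1 * \sum_(i < n) r i) `^ p <= \sum_(i < n) r i `^ p.
Proof.
move=> p1 r0; elim: n => [|n IH]; first by rewrite !big_ord0 mul0r.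
rewrite !big_ord_recr /=.
set S := \sum_(i < n) r i; set T := \sum_(i < n) r i `^ p.
have S0 : 0 <= S by apply: sumr_ge0 => i _.
have n1 : (0 : R) < n.+1%:R by rewrite ltr0n.
case: n IH @S @T S0 n1 => [|n] IH S T S0 n1.
  rewrite /S /T !big_ord0 !add0r mul1r invr1 mul1r; lra.
pose t : R := n.+1%:R / n.+2%:R.
have t0 : 0 <= t by rewrite /t divr_ge0.
have t1 : t <= 1 by rewrite /t ler_pdivrMr // mul1r ler_nat.
have E : (n.+2%:R^-1 * (S + r n.+1)) = t * (n.+1%:R^-1 * S) + (1 - t) * r n.+1.
  have e2 : n.+2%:R = n.+1%:R + 1 :> R by rewrite mulrSr.
  have h1 : n.+1%:R != 0 :> R by rewrite pnatr_eq0.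
  rewrite /t e2; field.
  by apply/andP; split; rewrite gt_eqF //; have := ler0n R n; lra.
rewrite E.
have Sn0 : 0 <= n.+1%:R^-1 * S by rewrite mulr_ge0 // invr_ge0.
have C := @conv2 p t _ _ p1 t0 t1 Sn0 (r0 n.+1).
apply: (le_trans (ler_wpM2l (ler0n _ _) C)).
rewrite mulrDr !mulrA.
rewrite [n.+2%:R * n.+1%:R]mulrC mulfK ?pnatr_eq0 //.
have -> : n.+2%:R * (1 - t) = 1.
  have e2 : n.+2%:R = n.+1%:R + 1 :> R by rewrite mulrSr.
  rewrite /t e2; field.
  by rewrite gt_eqF //; have := ler0n R n; lra.
rewrite mul1r lerD2r; exact: IH.
Qed.
End PM.
Section D1.
Variable R : realType.
Local Notation C := (R[i]).

Lemma mono_off n (i0 : 'I_n) (v : 'I_n -> C) (al : {ffun 'I_n -> nat}) :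
  (forall i, i != i0 -> v i = 0) -> (exists i, i != i0 /\ al i != 0%N) ->
  mono v al = 0.
Proof.
move=> hv [i [hi ha]]; rewrite /mono (bigD1 i) //= hv // expr0n.
by rewrite (negPf ha) mul0r.
Qed.

Lemma mono_ext n (i0 : 'I_n) (v : 'I_n -> C) j :
  (forall i, i != i0 -> v i = 0) -> mono v (ext i0 j) = v i0 ^+ j.
Proof.
move=> hv; rewrite /mono (bigD1 i0) //= big1 ?mulr1; first by rewrite ffunE eqxx.
by move=> i hi; rewrite ffunE (negPf hi) expr0.
Qed.

Lemma cmono_off n (i0 : 'I_n) (v : 'I_n -> C) (al : {ffun 'I_n -> nat}) :
  (forall i, i != i0 -> v i = 0) -> (exists i, i != i0 /\ al i != 0%N) ->
  cmono v al = 0.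
Proof.
move=> hv [i [hi ha]]; rewrite /cmono (bigD1 i) //= hv // cmod0 expr0n.
by rewrite (negPf ha) mul0r.
Qed.

Lemma cmono_ext n (i0 : 'I_n) (v : 'I_n -> C) j :
  (forall i, i != i0 -> v i = 0) -> cmono v (ext i0 j) = cmod (v i0) ^+ j.
Proof.
move=> hv; rewrite /cmono (bigD1 i0) //= big1 ?mulr1; first by rewrite ffunE eqxx.
by move=> i hi; rewrite ffunE (negPf hi) expr0.
Qed.

Lemma mono1 (w : 'I_1 -> C) j : mono w (j1 j) = w ord0 ^+ j.
Proof. by rewrite /mono big_ord1 ffunE. Qed.

Lemma cmono1 (w : 'I_1 -> C) j : cmono w (j1 j) = cmod (w ord0) ^+ j.
Proof. by rewrite /cmono big_ord1 ffunE. Qed.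

Lemma cmono_ge0 k (z : 'I_k -> C) al : 0 <= cmono z al.
Proof. by apply: prodr_ge0 => i _; rewrite exprn_ge0 // cmod_ge0. Qed.

Lemma rpow_off n (i0 : 'I_n) (r : 'I_n -> R) p (al : {ffun 'I_n -> nat}) :
  0 < p -> (forall i, i != i0 -> r i = 0) -> (exists i, i != i0 /\ al i != 0%N) ->
  rpow_mono r p al = 0.
Proof.
move=> p0 hv [i [hi ha]]; rewrite /rpow_mono (bigD1 i) //= hv // powR0 ?mul0r //.
by rewrite mulf_neq0 ?gt_eqF // ltr0n lt0n.
Qed.

Lemma rpow_ext n (i0 : 'I_n) (r : 'I_n -> R) p j :
  (forall i, i != i0 -> r i = 0) -> rpow_mono r p (ext i0 j) = r i0 `^ (p * j%:R).
Proof.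
move=> hv; rewrite /rpow_mono (bigD1 i0) //= big1 ?mulr1; first by rewrite ffunE eqxx.
by move=> i hi; rewrite ffunE (negPf hi) mulr0 powRr0.
Qed.

Section Fn.
Variables (H : lmodType C) (ip : H -> H -> C).
Hypothesis hH : is_hilbert ip.

Lemma fnorm_ge0 k (Om : set ('I_k -> C)) F : Om !=set0 -> 0 <= fnorm ip Om F.
Proof.
move=> [z hz]; apply: sup_ge0'; exists (opnorm ip (F z)); first by exists z.
exact: (opnorm_ge0 hH).
Qed.

Lemma fnorm_comp k1 k2 (Om1 : set ('I_k1 -> C)) (Om2 : set ('I_k2 -> C))
    (e : ('I_k1 -> C) -> ('I_k2 -> C)) (F : ('I_k2 -> C) -> H -> H) M :
  Om1 !=set0 -> (forall w, Om1 w -> Om2 (e w)) ->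
  (forall z x, Om2 z -> hnorm ip (F z x) <= M * hnorm ip x) ->
  fnorm ip Om1 (fun w => F (e w)) <= fnorm ip Om2 F.
Proof.
move=> [w0 hw0] he hM; apply: ge_sup; first by exists (opnorm ip (F (e w0))), w0.
move=> _ [w hw <-]; apply: sup_upper_bound; last by exists (e w) => //; exact: he.
split; first by exists (opnorm ip (F (e w))), (e w) => //; exact: he.
exists (Num.max M 0) => _ [z hz <-]; apply: (opnorm_le hH) => x hx.
by apply: bnd_max hx => y; exact: hM.
Qed.
End Fn.

Definition emb n (i0 : 'I_n) (w : 'I_1 -> C) : 'I_n -> C :=
  fun i => w ord0 * Defs.canon R i0 i.

Lemma emb_off n (i0 : 'I_n) w i : i != i0 -> emb i0 w i = 0.
Proof. by move=> hi; rewrite /emb /Defs.canon eq_sym (negPf hi) mulr0. Qed.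

Lemma emb_i0 n (i0 : 'I_n) w : emb i0 w i0 = w ord0.
Proof. by rewrite /emb /Defs.canon eqxx mulr1. Qed.

Lemma emb_in n (nz : ('I_n -> C) -> R) (i0 : 'I_n) w : unc_norm nz ->
  unit_disc w -> ball_Z nz (emb i0 w).
Proof.
by move=> hnz hw; rewrite /ball_Z /= /emb (nz_scale hnz) (nz_normalized hnz) mulr1.
Qed.

Section Restr.
Variables (H : lmodType C) (ip : H -> H -> C).
Hypothesis hH : is_hilbert ip.

Lemma restrict_pluri n (nz : ('I_n -> C) -> R) (i0 : 'I_n) a b c F :
  unc_norm nz ->
  pluri_bdd ip (ball_Z nz) a b c F ->
  pluri_bdd ip (@unit_disc R) (fun al => a (ext i0 (al ord0)))
     (fun al => b (ext i0 (al ord0))) (fun al => c (ext i0 (al ord0)))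
     (fun w => F (emb i0 w)).
Proof.
move=> hnz [hBH [hb0 [hadj [habs [hconv hbd]]]]].
have ext0 : ext i0 0 = [ffun=> 0%N].
  by apply/ffunP => i; rewrite !ffunE; case: (i == i0).
split; first by move=> al; exact: hBH.
split; first by rewrite ffunE ext0.
split; first by move=> al; exact: hadj.
split.
  move=> w hw; have [M hM] := habs _ (emb_in i0 hnz hw); exists M => N.
  apply: le_trans (hM N).
  rewrite (@sum_supp1 _ N (fun al => (opnorm ip (a (ext i0 (al ord0))) +
      opnorm ip (b (ext i0 (al ord0)))) * cmono w al)).
  rewrite (sum_supp N (i0 := i0) (Phi := fun al => (opnorm ip (a al) +
      opnorm ip (b al)) * cmono (emb i0 w) al)).
    apply: ler_sum => j _; rewrite ffunE cmono1 cmono_ext; last exact: emb_off.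
    by rewrite emb_i0.
  move=> al hal; rewrite (cmono_off (i0 := i0)) ?mulr0 //; exact: emb_off.
split.
  move=> w x hw e he; have [N0 hN0] := hconv _ x (emb_in i0 hnz hw) e he.
  exists N0 => N hN; apply: le_lt_trans (hN0 N hN) => /=.
  suff -> : psum (fun al => a (ext i0 (al ord0))) (fun al => c (ext i0 (al ord0))) w x N
          = psum a c (emb i0 w) x N by [].
  rewrite /psum (@sum_supp1 _ N (fun al => mono w al *: a (ext i0 (al ord0)) x +
     mono (fun i => conjc (w i)) al *: c (ext i0 (al ord0)) x)).
  rewrite (sum_supp N (i0 := i0) (Phi := fun al => mono (emb i0 w) al *: a al x +
     mono (fun i => conjc (emb i0 w i)) al *: c al x)).
    apply: eq_bigr => j _; rewrite ffunE mono1 mono1 !mono_ext ?emb_i0 //.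
      by move=> i hi; rewrite emb_off // conjc0.
    exact: emb_off.
  move=> al hal; rewrite !(mono_off (i0 := i0)) ?scale0r ?addr0 //.
    by move=> i hi; rewrite emb_off // conjc0.
  exact: emb_off.
have [M hM] := hbd; exists M => w x hw; exact: hM (emb_in i0 hnz hw).
Qed.
End Restr.

Lemma disc0 : (@unit_disc R) (fun=> 0).
Proof. by rewrite /unit_disc /= expr0n /= addr0 sqrtr0 ltr01. Qed.

Lemma dir1 (H : lmodType C) (ip : H -> H -> C) (Y : lmodType C) (ny : Y -> R)
    (U : (H -> H) -> Y) (p lam : R) n (nz : ('I_n -> C) -> R) (i0 : 'I_n) (r1 r0 : R) :
  is_hilbert ip -> 1 <= p -> unc_norm nz ->
  R_cond ip ny U p lam (@unit_disc R) r1 -> 0 <= r0 -> (r0 < r1 \/ r0 = 0) ->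
  AP_cond ip ny U p lam (ball_Z nz) (fun i => if i == i0 then r0 else 0).
Proof.
move=> hH hp hnz hR r00 hr a b c F hf N.
have p0 : 0 < p by apply: lt_le_trans hp.
have hg := restrict_pluri i0 hnz hf.
pose z := fun _ : 'I_1 => r0%:C.
have hz : scale_dom r1 (@unit_disc R) z.
  case: hr => [lt|hr0].
    have r1p : 0 < r1 by apply: le_lt_trans lt.
    exists (fun _ => (r0 / r1)%:C).
      have q0 : 0 <= r0 / r1 by rewrite divr_ge0 // ltW.
      change (cmod ((r0 / r1)%:C) < 1); rewrite cmodR ger0_norm //.
      by rewrite ltr_pdivrMr // mul1r.
    apply: funext => i; rewrite /z -rmorphM /=; congr (_%:C).
    by rewrite mulrC divfK // gt_eqF.
  exists (fun=> 0); first exact: disc0.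
  by apply: funext => i; rewrite /z hr0 mulr0.
have H1 := hR _ _ _ _ hg z hz N.
rewrite (sum_supp N (i0 := i0) (Phi := fun al =>
   (ny (U (a al)) `^ p + ny (U (b al)) `^ p) * rpow_mono
      (fun i => if i == i0 then r0 else 0) p al)); last first.
  move=> al hal; rewrite (rpow_off (i0 := i0)) ?mulr0 //.
  by move=> i hi; rewrite (negPf hi).
rewrite (@sum_supp1 _ N (fun al => (ny (U (a (ext i0 (al ord0)))) `^ p +
   ny (U (b (ext i0 (al ord0)))) `^ p) * cmono z al `^ p)) in H1.
have hF : exists M, forall z x, ball_Z nz z -> hnorm ip (F z x) <= M * hnorm ip x.
  by case: hf => [_ [_ [_ [_ [_ hb]]]]].
have [M hM] := hF.
have H2 : lam `^ p * fnorm ip (@unit_disc R) (fun w => F (emb i0 w)) `^ p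
          <= lam `^ p * fnorm ip (ball_Z nz) F `^ p.
  apply: ler_wpM2l; first exact: powR_ge0.
  apply: ge0_ler_powR; first exact: ltW.
  - by rewrite nnegrE; apply: (fnorm_ge0 hH); exists (fun=> 0); exact: disc0.
  - by rewrite nnegrE; apply: (fnorm_ge0 hH); exists (emb i0 (fun=> 0)); exact: emb_in disc0.
  apply: (fnorm_comp hH (M := M)) => //; first by exists (fun=> 0); exact: disc0.
  by move=> w hw; exact: emb_in.
apply: le_trans H2; apply: le_trans H1; rewrite le_eqVlt; apply/orP; left; apply/eqP.
apply: eq_bigr => j _; rewrite ffunE rpow_ext ?eqxx; last by move=> i /negPf ->.
rewrite [in RHS]mulrC [in LHS]mulrC; congr (_ * _).
by rewrite cmono1 /z cmodR ger0_norm // -powR_mulrn // -powRrM mulrC.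
Qed.
End D1.
Section S.

Lemma S_inner (K : comNzRingType) n N j (m : K) (y : 'I_n -> K) : (j < N)%N ->
  \sum_(be : {ffun 'I_n -> 'I_N} | mdeg (mi be) == j)
     (coef (mi be))%:R * m ^+ (mdeg (mi be)) * \prod_(i < n) y i ^+ (mi be i)
  = (m * \sum_(i < n) y i) ^+ j.
Proof.
move=> hj; rewrite mulr_sumr -(multinom (fun i => m * y i) hj).
apply: eq_bigr => be _; rewrite -mulrA; congr (_ * _).
have -> : \prod_(i < n) (m * y i) ^+ be i = \prod_(i < n) (m ^+ be i * y i ^+ be i).
  by apply: eq_bigr => i _; rewrite exprMn.
rewrite big_split /= prodrXr; congr (_ ^+ _ * _).
  by rewrite /mdeg; apply: eq_bigr => i _; rewrite ffunE.
by apply: eq_bigr => i _; rewrite ffunE.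
Qed.

Lemma S_scal (K : comNzRingType) n N (m : K) (y : 'I_n -> K) (Phi : nat -> K) :
  \sum_(be : {ffun 'I_n -> 'I_N} | (mdeg (mi be) < N)%N)
     ((coef (mi be))%:R * m ^+ (mdeg (mi be)) * \prod_(i < n) y i ^+ (mi be i))
       * Phi (mdeg (mi be))
  = \sum_(j < N) (m * \sum_(i < n) y i) ^+ j * Phi j.
Proof.
rewrite sum_deg; apply: eq_bigr => j _.
rewrite -(S_inner m y (ltn_ord j)) mulr_suml.
by apply: eq_bigr => be /eqP ->.
Qed.

Lemma S_vec (K : comNzRingType) (V : lmodType K) n N (m : K) (y : 'I_n -> K)
    (Phi : nat -> V) :
  \sum_(be : {ffun 'I_n -> 'I_N} | (mdeg (mi be) < N)%N)
     ((coef (mi be))%:R * m ^+ (mdeg (mi be)) * \prod_(i < n) y i ^+ (mi be i))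
       *: Phi (mdeg (mi be))
  = \sum_(j < N) (m * \sum_(i < n) y i) ^+ j *: Phi j.
Proof.
rewrite sum_deg; apply: eq_bigr => j _.
rewrite -(S_inner m y (ltn_ord j)) scaler_suml.
by apply: eq_bigr => be /eqP ->.
Qed.
End S.
Section NZ.
Variable R : realType.
Local Notation C := (R[i]).
Variables (n : nat) (nz : ('I_n -> C) -> R).
Hypothesis hnz : unc_norm nz.

Lemma nz0 : nz (fun=> 0) = 0.
Proof.
transitivity (nz (fun i : 'I_n => (0 : C) * (fun=> 0) i)).
  by congr nz; apply: funext => i; rewrite mul0r.
by rewrite (nz_scale hnz) cmod0 mul0r.
Qed.

Lemma cmodN1 : cmod (-1 : C) = 1.
Proof. by rewrite -[-1](rmorphN1 (real_complex R)) cmodR normrN normr1. Qed.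

Lemma nz_ge0 x : 0 <= nz x.
Proof.
have := nz_triangle hnz x (fun i => -1 * x i).
rewrite (nz_scale hnz) cmodN1 mul1r.
have -> : (fun i => x i + -1 * x i) = fun=> 0 by apply: funext => i; rewrite mulN1r subrr.
rewrite nz0 => h; lra.
Qed.

Lemma cmod_canon (i j : 'I_n) : cmod (Defs.canon R i j) <= 1.
Proof.
rewrite /Defs.canon; case: (i == j); first by rewrite /cmod Normc.normc1.
by rewrite cmod0 ler01.
Qed.

Lemma cmod_coord x i : cmod (x i) <= nz x.
Proof.
have := @nz_unconditional _ _ _ hnz (Defs.canon R i) x (cmod_canon i).
have -> : (fun j => Defs.canon R i j * x j) = fun j => x i * Defs.canon R i j.
  apply: funext => j; rewrite /Defs.canon; case: eqP => [->|_].
    by rewrite mul1r mulr1.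
  by rewrite mul0r mulr0.
by rewrite (nz_scale hnz) (nz_normalized hnz) mulr1.
Qed.

Lemma sum_coord x : \sum_(i < n) cmod (x i) <= n%:R * nz x.
Proof.
have -> : n%:R * nz x = \sum_(i < n) nz x by rewrite sumr_const card_ord mulr_natl.
by apply: ler_sum => i _; exact: cmod_coord.
Qed.

Lemma M_ub x : nz x <= 1 -> \sum_(i < n) cmod (x i) <= id_to_l1 nz.
Proof.
move=> hx; apply: sup_upper_bound; last by exists x.
split; first by exists (\sum_(i < n) cmod (x i)), x.
exists n%:R => _ [y hy <-]; apply: (le_trans (sum_coord y)).
by rewrite -[X in _ <= X]mulr1 ler_wpM2l.
Qed.

Lemma M_ge1 : (0 < n)%N -> 1 <= id_to_l1 nz.
Proof.
move=> n0; pose i0 : 'I_n := Ordinal n0.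
have := M_ub (x := Defs.canon R i0); rewrite (nz_normalized hnz) lexx.
rewrite (bigD1 i0) //= big1 ?addr0; first by rewrite expr1n expr0n /= addr0 sqrtr1; apply.
by move=> i hi; rewrite /Defs.canon eq_sym (negPf hi) cmod0.
Qed.

Lemma M_lt z : (0 < n)%N -> nz z < 1 -> \sum_(i < n) cmod (z i) < id_to_l1 nz.
Proof.
move=> n0 hz; have M1 := M_ge1 n0.
have s0 := nz_ge0 z.
pose t : R := (1 + nz z) / 2.
have t0 : 0 < t by rewrite /t; lra.
have t1 : t < 1 by rewrite /t; lra.
have st : nz z < t by rewrite /t; lra.
have hx1 : nz (fun i => (t^-1)%:C * z i) <= 1.
  rewrite (nz_scale hnz) cmodR ger0_norm; last by rewrite invr_ge0 ltW.
  by rewrite ler_pdivrMl // mulr1; exact: ltW.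
have h := M_ub hx1.
have E : \sum_(i < n) cmod ((t^-1)%:C * z i) = t^-1 * \sum_(i < n) cmod (z i).
  rewrite mulr_sumr; apply: eq_bigr => i _.
  by rewrite cmodM cmodR ger0_norm // invr_ge0 ltW.
rewrite E ler_pdivrMl // in h.
apply: (le_lt_trans h); rewrite -[X in _ < X]mul1r ltr_pM2r //; lra.
Qed.
End NZ.
Section D2.
Variable R : realType.
Local Notation C := (R[i]).
Variables (n : nat) (nz : ('I_n -> C) -> R).
Hypothesis hnz : unc_norm nz.
Hypothesis n0 : (0 < n)%N.

Definition mI := (id_to_l1 nz)^-1.
Definition kap (al : {ffun 'I_n -> nat}) : R := (coef al)%:R * mI ^+ mdeg al.
Definition wz (z : 'I_n -> C) : 'I_1 -> C := fun _ => mI%:C * \sum_(i < n) z i.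

Lemma M_gt0 : 0 < id_to_l1 nz.
Proof. exact: lt_le_trans ltr01 (M_ge1 hnz n0). Qed.

Lemma mI_ge0 : 0 <= mI.
Proof. by rewrite /mI invr_ge0 ltW // M_gt0. Qed.

Lemma kap_ge0 al : 0 <= kap al.
Proof. by rewrite /kap mulr_ge0 // exprn_ge0 // mI_ge0. Qed.

Lemma mI_lt1 s : s < id_to_l1 nz -> mI * s < 1.
Proof. by move=> hs; rewrite /mI mulrC ltr_pdivrMr ?M_gt0 // mul1r. Qed.

Lemma wz_in z : ball_Z nz z -> unit_disc (wz z).
Proof.
move=> hz; change (cmod (mI%:C * \sum_(i < n) z i) < 1).
rewrite cmodM cmodR ger0_norm ?mI_ge0 //.
apply: le_lt_trans (_ : mI * \sum_(i < n) cmod (z i) < 1).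
  by apply: ler_wpM2l; [exact: mI_ge0 | exact: cmod_sum].
exact/mI_lt1/(M_lt hnz n0).
Qed.

Lemma wabs_in z : ball_Z nz z ->
  unit_disc (fun _ : 'I_1 => (mI * \sum_(i < n) cmod (z i))%:C).
Proof.
move=> hz; change (cmod ((mI * \sum_(i < n) cmod (z i))%:C) < 1).
rewrite cmodR ger0_norm; last by rewrite mulr_ge0 ?mI_ge0 // sumr_ge0 // => i _; exact: cmod_ge0.
exact/mI_lt1/(M_lt hnz n0).
Qed.

Section Ext.
Variables (H : lmodType C) (ip : H -> H -> C).
Hypothesis hH : is_hilbert ip.

Definition liftc (a : {ffun 'I_1 -> nat} -> H -> H) : {ffun 'I_n -> nat} -> H -> H :=
  fun al x => (kap al)%:C *: a (j1 (mdeg al)) x.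

Lemma kapC (al : {ffun 'I_n -> nat}) :
  (kap al)%:C = (coef al)%:R * mI%:C ^+ mdeg al.
Proof. by rewrite /kap rmorphM rmorph_nat rmorphXn. Qed.

Lemma ext_pluri a b c G : pluri_bdd ip (@unit_disc R) a b c G ->
  pluri_bdd ip (ball_Z nz) (liftc a) (liftc b) (liftc c) (fun z => G (wz z)).
Proof.
move=> [hBH [hb0 [hadj [habs [hconv hbd]]]]].
split.
  by move=> al; case: (hBH (j1 (mdeg al))) => h1 h2; split; apply: BH_scale.
split.
  have md0 : mdeg ([ffun=> 0%N] : {ffun 'I_n -> nat}) = 0%N.
    by rewrite /mdeg big1 // => i _; rewrite ffunE.
  by apply: funext => x; rewrite /liftc md0 /j1 hb0 scaler0.
split.
  by move=> al x y; rewrite /liftc (ip_scalel hH) hadj (ip_scaler hH) conjc_real.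
split.
  move=> z hz; have [Mg hMg] := habs _ (wabs_in hz); exists Mg => N.
  apply: le_trans (hMg N).
  rewrite (@sum_supp1 _ N (fun al => (opnorm ip (a al) + opnorm ip (b al)) *
        cmono (fun _ : 'I_1 => (mI * \sum_(i < n) cmod (z i))%:C) al)).
  have h1 : \sum_(be : {ffun 'I_n -> 'I_N} | (mdeg (mi be) < N)%N)
      (opnorm ip (liftc a (mi be)) + opnorm ip (liftc b (mi be))) * cmono z (mi be)
    <= \sum_(be : {ffun 'I_n -> 'I_N} | (mdeg (mi be) < N)%N)
      ((coef (mi be))%:R * mI ^+ (mdeg (mi be)) * \prod_(i < n) cmod (z i) ^+ (mi be i))
       * (fun j => opnorm ip (a (j1 j)) + opnorm ip (b (j1 j))) (mdeg (mi be)).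
    apply: ler_sum => be _; rewrite /=.
    have [ha hb] := hBH (j1 (mdeg (mi be))).
    apply: le_trans (_ : (kap (mi be) * opnorm ip (a (j1 (mdeg (mi be)))) +
         kap (mi be) * opnorm ip (b (j1 (mdeg (mi be))))) * cmono z (mi be) <= _).
      apply: ler_wpM2r; first exact: cmono_ge0.
      by apply: lerD; apply: (opnormZ hH) => //; exact: kap_ge0.
    by rewrite -mulrDr /kap /cmono mulrAC.
  apply: le_trans h1 _; rewrite (S_scal N mI (fun i => cmod (z i)) (fun j => opnorm ip (a (j1 j)) + opnorm ip (b (j1 j)))).
  rewrite le_eqVlt; apply/orP; left; apply/eqP.
  have w0 : 0 <= mI * \sum_(i < n) cmod (z i).
    by rewrite mulr_ge0 ?mI_ge0 // sumr_ge0 // => i _; exact: cmod_ge0.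
  by apply: eq_bigr => j _; rewrite cmono1 cmodR ger0_norm // mulrC.
split.
  move=> z x hz e he; have [N0 hN0] := hconv _ x (wz_in hz) e he.
  exists N0 => N hN; apply: le_lt_trans (hN0 N hN) => /=.
  suff -> : psum (liftc a) (liftc c) z x N = psum a c (wz z) x N by [].
  rewrite /psum (@sum_supp1 _ N (fun al => mono (wz z) al *: a al x +
     mono (fun i => conjc (wz z i)) al *: c al x)) big_split /=.
  rewrite big_split /=.
  have E1 (y : 'I_n -> C) (f : {ffun 'I_1 -> nat} -> H -> H) :
    \sum_(be : {ffun 'I_n -> 'I_N} | (mdeg (mi be) < N)%N) mono y (mi be) *: liftc f (mi be) x
    = \sum_(j < N) (mI%:C * \sum_(i < n) y i) ^+ j *: f (j1 j) x.
    rewrite -(S_vec N mI%:C y (fun j => f (j1 j) x)); apply: eq_bigr => be _.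
    by rewrite /liftc scalerA kapC /mono mulrC.
  rewrite E1 E1; congr (_ + _); apply: eq_bigr => j _; rewrite mono1 //; symmetry.
  by rewrite /wz rmorphM rmorph_sum /= oppr0.
have [Mb hMb] := hbd; exists Mb => z x hz; exact: hMb _ _ (wz_in hz).
Qed.
End Ext.

Lemma natpow (c : nat) (p : R) : 1 <= p -> (c%:R : R) <= c%:R `^ p.
Proof.
move=> hp; case: c => [|c]; first by rewrite powR0 // gt_eqF // (lt_le_trans ltr01 hp).
by apply: le1r_powR => //; rewrite ler1n.
Qed.

Lemma powX (x p : R) j : 0 <= x -> (x ^+ j) `^ p = (x `^ p) ^+ j.
Proof.
move=> x0; rewrite -powR_mulrn // -powRrM mulrC powRrM powR_mulrn //.
exact: powR_ge0.
Qed.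

Lemma powmean_ord (p : R) (r : 'I_n -> R) : 1 <= p -> (forall i, 0 <= r i) ->
  n%:R * ((n%:R)^-1 * \sum_(i < n) r i) `^ p <= \sum_(i < n) r i `^ p.
Proof.
move=> hp r0; pose i0 : 'I_n := Ordinal n0.
pose r' (k : nat) := r (insubd i0 k).
have E (f : R -> R) : \sum_(i < n) f (r i) = \sum_(i < n) f (r' i).
  by apply: eq_bigr => i _; rewrite /r' valKd.
rewrite (E id) (E (fun x => x `^ p)); apply: powmean_nat => // k; exact: r0.
Qed.

Lemma dir2 (H : lmodType C) (ip : H -> H -> C) (Y : lmodType C) (ny : Y -> R)
    (U : (H -> H) -> Y) (p lam : R) (r : 'I_n -> R) :
  is_hilbert ip -> is_banach ny -> Ulinear ip U -> 1 <= p ->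
  (forall i, 0 <= r i) -> AP_cond ip ny U p lam (ball_Z nz) r ->
  R_cond ip ny U p lam (@unit_disc R)
    (mI * (n%:R `^ p^-1 * ((n%:R)^-1 * \sum_(i < n) r i))).
Proof.
move=> hH hY hU hp r0 hAP a b c G hg w hw N.
have p0 : 0 < p by apply: lt_le_trans hp.
set rho := mI * (n%:R `^ p^-1 * ((n%:R)^-1 * \sum_(i < n) r i)).
have avg0 : 0 <= (n%:R)^-1 * \sum_(i < n) r i.
  by rewrite mulr_ge0 // ?invr_ge0 // sumr_ge0.
have rho0 : 0 <= rho by rewrite /rho mulr_ge0 ?mI_ge0 // mulr_ge0 // powR_ge0.
have hf := ext_pluri hH hg.
have H1 := hAP _ _ _ _ hf N.
have [Mb hMb] : exists M, forall w x, unit_disc w -> hnorm ip (G w x) <= M * hnorm ip x.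
  by case: hg => [_ [_ [_ [_ [_ hb]]]]].
have hB0 : ball_Z nz (fun=> 0) by rewrite /ball_Z /= nz0 // ltr01.
have H2 : lam `^ p * fnorm ip (ball_Z nz) (fun z => G (wz z)) `^ p
          <= lam `^ p * fnorm ip (@unit_disc R) G `^ p.
  apply: ler_wpM2l; first exact: powR_ge0.
  apply: ge0_ler_powR; first exact: ltW.
  - by rewrite nnegrE; apply: (fnorm_ge0 hH); exists (fun=> 0).
  - by rewrite nnegrE; apply: (fnorm_ge0 hH); exists (fun=> 0); exact: disc0.
  apply: (fnorm_comp hH (e := wz) (M := Mb)) => //; first by exists (fun=> 0).
  by move=> z hz; exact: wz_in.
apply: le_trans H2; apply: le_trans H1.
rewrite (@sum_supp1 _ N (fun al => (ny (U (a al)) `^ p + ny (U (b al)) `^ p) * cmono w al `^ p)).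
pose X j := ny (U (a (j1 j))) `^ p + ny (U (b (j1 j))) `^ p.
have X0 j : 0 <= X j by rewrite /X addr_ge0 // powR_ge0.
have hrho : rho `^ p <= mI `^ p * \sum_(i < n) r i `^ p.
  rewrite /rho powRM ?mI_ge0 ?mulr_ge0 ?powR_ge0 //.
  apply: ler_wpM2l; first exact: powR_ge0.
  rewrite powRM ?powR_ge0 // -powRrM mulVf ?gt_eqF // powRr1 ?ler0n //.
  exact: powmean_ord.
  by rewrite sumr_ge0.
have hw0 : cmod (w ord0) <= rho.
  case: hw => u hu <-; rewrite cmodM cmodR ger0_norm //.
  rewrite -[X in _ <= X]mulr1; apply: ler_wpM2l => //; exact: ltW.
have stepC : \sum_(j < N) X j * cmono w (j1 j) `^ p
     <= \sum_(j < N) (mI `^ p * \sum_(i < n) r i `^ p) ^+ j * X j.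
  apply: ler_sum => j _; rewrite mulrC; apply: ler_wpM2r => //.
  rewrite cmono1 powX ?cmod_ge0 //; apply: lerXn2r; rewrite ?nnegrE ?powR_ge0 //.
    by rewrite mulr_ge0 ?powR_ge0 // sumr_ge0 // => i _; exact: powR_ge0.
  apply: le_trans hrho; apply: ge0_ler_powR; rewrite ?nnegrE ?cmod_ge0 //; exact: ltW.
apply: le_trans stepC _.
rewrite -(S_scal N (mI `^ p) (fun i => r i `^ p) X).
apply: ler_sum => be _.
rewrite /liftc !(UZ hH hU) ?(nyZR hY) ?kap_ge0 //; last first.
  by case: (hg) => [hBH _]; case: (hBH (j1 (mdeg (mi be)))).
  by case: (hg) => [hBH _]; case: (hBH (j1 (mdeg (mi be)))).
rewrite (powRM p (kap_ge0 _) (ny_ge0 hY _)) (powRM p (kap_ge0 _) (ny_ge0 hY _)) -mulrDr.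
rewrite [leRHS]mulrAC; apply: ler_wpM2r; first exact: X0.
have hmk : 0 <= mI ^+ mdeg (mi be) by rewrite exprn_ge0 // mI_ge0.
rewrite /kap (powRM p (ler0n _ _) hmk) (powX _ _ mI_ge0).
have -> : rpow_mono r p (mi be) = \prod_(i < n) (r i `^ p) ^+ mi be i.
  by apply: eq_bigr => i _; rewrite powRrM powR_mulrn ?powR_ge0.
rewrite -!mulrA; apply: ler_wpM2r.
  by rewrite mulr_ge0 ?exprn_ge0 ?powR_ge0 // prodr_ge0 // => i _; rewrite exprn_ge0 // powR_ge0.
exact: natpow.
Qed.
End D2.
Local Open Scope ereal_scope.

Theorem mainTheorem13 (R : realType)
    (H : lmodType R[i]) (ip : H -> H -> R[i])
    (Y : lmodType R[i]) (ny : Y -> R)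
    (U : (H -> H) -> Y) (lam p : R) (n : nat) (nz : ('I_n -> R[i]) -> R) :
  is_hilbert ip -> is_banach ny ->
  Ulinear ip U -> Ubounded ip ny U -> Unonnull ip U ->
  (Unorm ip ny U < lam)%R ->
  (1 <= p)%R ->
  (0 < n)%N -> unc_norm nz ->
  ((n%:R)^-1)%:E * R_lambda ip ny U p lam (@unit_disc R)
    <= AP_lambda ip ny U p lam (ball_Z nz)
  /\ AP_lambda ip ny U p lam (ball_Z nz)
    <= (id_to_l1 nz)%:E * ((n%:R `^ p^-1)^-1)%:E * R_lambda ip ny U p lam (@unit_disc R).
Proof.
move=> hH hY hUl _ _ _ hp n0 hnz.
have nR0 : (0 < n%:R :> R)%R by rewrite ltr0n.
split.
  rewrite /R_lambda -ereal_sup_pZl; last by rewrite invr_gt0.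
  apply/ereal_supP => _ [_ [r1 [r10 hr1] <-] <-].
  rewrite -EFinM.
  set AP := AP_lambda ip ny U p lam (ball_Z nz).
  pose i0 : 'I_n := Ordinal n0.
  have key : forall r0, (0 <= r0)%R -> (r0 < r1 \/ r0 = 0)%R ->
      ((n%:R)^-1 * r0)%:E <= AP.
    move=> r0 r00 hr; apply: ereal_sup_ubound.
    exists (fun i => if i == i0 then r0 else 0%R).
      split; first by move=> i; case: (i == i0).
      exact: (dir1 i0 hH hp hnz hr1 r00 hr).
    congr (_%:E); congr (_ * _)%R.
    rewrite (bigD1 i0) //= big1 ?addr0 // => i /negPf ->; done.
  have h0 := key 0%R (lexx _) (or_intror erefl); rewrite mulr0 in h0.
  have [r1z|r1p] : (r1 = 0 \/ 0 < r1)%R.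
    by move: r10; rewrite le_eqVlt => /orP [/eqP <-|]; [left|right].
    by rewrite r1z mulr0.
  rewrite leNgt; apply/negP => hlt.
  move: h0 hlt key; case: AP => [a| |] //= h0 hlt key.
  rewrite lte_fin in hlt; rewrite lee_fin in h0.
  pose r0 := ((n%:R * a + r1) / 2)%R.
  have na : (n%:R * a < r1)%R.
    by move: hlt; rewrite -(ltr_pM2l nR0) mulrA mulfV ?gt_eqF // mul1r.
  have r00 : (0 <= r0)%R by rewrite /r0 divr_ge0 // addr_ge0 // mulr_ge0 // ler0n.
  have := key r0 r00 (or_introl _); rewrite lee_fin.
  have -> : (r0 < r1)%R by rewrite /r0; lra.
  move=> /(_ isT); rewrite -(ler_pM2l nR0) mulrA mulfV ?gt_eqF // mul1r /r0.
  lra.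
rewrite -EFinM.
set M := id_to_l1 nz.
have M0 : (0 < M)%R by exact: (M_gt0 hnz n0).
have np0 : (0 < n%:R `^ p^-1)%R by apply: powR_gt0.
apply/ereal_supP => _ [r [r0 hr] <-].
have hR := dir2 hnz n0 hH hY hUl hp r0 hr.
set rho := (mI nz * _)%R in hR.
have avg0 : (0 <= (n%:R)^-1 * \sum_(i < n) r i)%R.
  by rewrite mulr_ge0 // ?invr_ge0 ?ler0n // sumr_ge0.
have rho0 : (0 <= rho)%R by rewrite /rho mulr_ge0 ?(mI_ge0 hnz n0) // mulr_ge0 // powR_ge0.
have hrho : rho%:E <= R_lambda ip ny U p lam (@unit_disc R).
  by apply: ereal_sup_ubound; exists rho.
have -> : ((n%:R)^-1 * \sum_(i < n) r i)%R = (M * (n%:R `^ p^-1)^-1 * rho)%R.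
  rewrite /rho /mI -/M; field.
  by rewrite !gt_eqF.

rewrite [leLHS]EFinM; apply: (lee_wpmul2l _ hrho).
by rewrite lee_fin mulr_ge0 // ?ltW // invr_ge0 ltW.
Qed.
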